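(* Let $T>0$, $C_1>0$, and let $H:(0,1)^n\times\mathbb S(n)\to\mathbb R^n$, $B:(0,1)^n\times\mathbb S(n)\to\mathbb S(n)$ be $C^1$ with $(B(\mu,p),p)\ge(H(\mu,p),\mu)-C_1$ and $H_i(\mu,p)\ge-C_1$ for all $(\mu,p)$ and $i$, and let $g:[0,1]^n\to\mathbb R^n$ satisfy $|g_i|\le C_1$ on $[0,1]^n$. Let $\epsilon>0$, $\mu\in\mathcal P_\epsilon(\mathbb G)$, $t\in[0,T)$, $\lambda\in[0,1]$. Then every classical solution $(\phi,\rho):[t,T]\to\mathbb R^n\times(0,1)^n$ of $$\dot\phi=H(\rho,\lambda\nabla_{\mathbb G}\phi)-\Delta_{\mathbb G}\phi,\quad \dot\rho=\nabla_{\mathbb G}\cdot B(\rho,\lambda\nabla_{\mathbb G}\phi)+\Delta_{\mathbb G}\rho\ \text{ on }(t,T),\quad \phi(T)=g(\rho(T)),\ \rho(t)=\mu,$$ satisfies $$\epsilon\,\Big\|\max_{1\le i\le n}|\lambda\phi_i|\Big\|_{L^\infty(t,T)}\le(5(T-t)+4)C_1.$$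
   Context: $\mathbb G$ is a finite connected simple undirected graph on $\{1,\dots,n\}$ with symmetric edge weights $\omega_{ij}>0$ iff $(i,j)$ is an edge. $\mathbb S(n)$: skew-symmetric matrices with $(m,\tilde m)=\frac12\sum_{(i,j)\in\mathbb E}m^{ij}\tilde m^{ij}$; Euclidean inner product on $\mathbb R^n$. $(\nabla_{\mathbb G}u)^{ij}=\sqrt{\omega_{ij}}(u^i-u^j)$, $(\nabla_{\mathbb G}\cdot m)^i=\sum_{j\ne i}\sqrt{\omega_{ij}}m^{ji}$, $(\Delta_{\mathbb G}u)^i=\sum_j\omega_{ij}(u^j-u^i)$. $\mathcal P_\epsilon(\mathbb G)$: probability vectors with all entries $>\epsilon$. Classical solution: a $C^1$ pair satisfying the system pointwise. *)

(* Defs.v *)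
From HB Require Import structures.
From mathcomp Require Import all_boot all_order all_algebra.
From mathcomp Require Import all_classical all_reals all_analysis.
Set Implicit Arguments. Unset Strict Implicit. Unset Printing Implicit Defensive.
Import Order.TTheory GRing.Theory Num.Theory.
Import numFieldNormedType.Exports.
Local Open Scope classical_set_scope.
Local Open Scope ring_scope.

Section GraphDefs.
Variables (R : realType) (n : nat).

(* Weighted graph on 'I_n given by its weights: (i,j) is an edge iff 0 < w i j.
   Finite connected simple undirected graph: symmetric, nonnegative weights,
   no loops (w i i = 0), connected. *)
Definition weighted_graph (w : 'I_n -> 'I_n -> R) : Prop :=
  [/\ (forall i j, w i j = w j i),
      (forall i j, 0 <= w i j),
      (forall i, w i i = 0) &
      (forall i j, connect [rel a b | 0 < w a b] i j)].

Definition skew_sym (m : 'M[R]_n) : Prop := forall i j, m i j = - m j i.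

Definition vc (u : 'rV[R]_n) (i : 'I_n) : R := u ord0 i.

Definition vdot (u v : 'rV[R]_n) : R := \sum_i vc u i * vc v i.

Definition sdot (w : 'I_n -> 'I_n -> R) (m m' : 'M[R]_n) : R :=
  2^-1 * \sum_(i < n) \sum_(j < n | 0 < w i j) m i j * m' i j.

Definition ggrad (w : 'I_n -> 'I_n -> R) (u : 'rV[R]_n) : 'M[R]_n :=
  \matrix_(i, j) (Num.sqrt (w i j) * (vc u i - vc u j)).
Definition gdiv (w : 'I_n -> 'I_n -> R) (m : 'M[R]_n) : 'rV[R]_n :=
  \row_i (\sum_(j < n | j != i) Num.sqrt (w i j) * m j i).
Definition glap (w : 'I_n -> 'I_n -> R) (u : 'rV[R]_n) : 'rV[R]_n :=
  \row_i (\sum_(j < n) w i j * (vc u j - vc u i)).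

Definition Peps (eps : R) (mu : 'rV[R]_n) : Prop :=
  \sum_i vc mu i = 1 /\ forall i, eps < vc mu i.

Definition dom01S : set ('rV[R]_n * 'M[R]_n) :=
  [set x | (forall i, 0 < vc x.1 i < 1) /\ skew_sym x.2].

Definition tangS : set ('rV[R]_n * 'M[R]_n) := [set v | skew_sym v.2].

End GraphDefs.

(* C^1 on D, D relatively open in an affine translate of the subspace S:
   directional derivatives exist in every direction of S at every point of D
   and depend continuously (within D) on the point. *)
Definition C1_on (R : realType) (V W : normedModType R) (S D : set V)
  (f : V -> W) : Prop :=
  (forall x v, D x -> S v -> derivable f x v) /\
  (forall v, S v -> {within D, continuous (fun x => 'D_v f x)}).

Definition C1_interval (R : realType) (V : normedModType R) (a b : R)
  (f : R -> V) : Prop :=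
  {within `[a, b], continuous f} /\
  (forall s, a < s < b -> derivable f s 1) /\
  exists g : R -> V, {within `[a, b], continuous g} /\
    (forall s, a < s < b -> derive1 f s = g s).

(* Main.v *)
Require Import Defs.
From HB Require Import structures.
From mathcomp Require Import all_boot all_order all_algebra.
From mathcomp Require Import all_classical all_reals all_analysis.
From mathcomp Require Import ring lra.
Import Order.TTheory GRing.Theory Num.Theory.
Import numFieldNormedType.Exports.
Local Open Scope classical_set_scope.
Local Open Scope ring_scope.
Lemma vc_derive (R : realType) n (f : R -> 'rV[R]_n) s i :
  derivable f s 1 -> is_derive s 1 (fun r => vc (f r) i) (vc (derive1 f s) i).
Proof.
move=> df.
have L : (fun h : R => h^-1 *: ((f \o shift s) (h *: 1) - f s)) @ 0^' --> 'D_1 f s.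
  exact: df.
have L2 := cvg_comp _ _ L (@coord_continuous R 1 n ord0 i ('D_1 f s)).
have E : ((fun M : 'M[R]_(1, n) => M ord0 i) \o (fun h : R => h^-1 *: ((f \o shift s) (h *: 1) - f s)))
   = (fun h : R => h^-1 *: (((fun r => vc (f r) i) \o shift s) (h *: 1) - vc (f s) i)).
  by apply: funext => h /=; rewrite /vc !mxE.
rewrite E in L2.
have D : derivable (fun r => vc (f r) i) s 1 by apply/cvg_ex; eexists; exact: L2.
apply: DeriveDef => //.
rewrite derive1E; exact: (cvg_lim _ L2).
Qed.

Lemma vc_cont (R : realType) n (f : R -> 'rV[R]_n) (A : set R) i :
  {within A, continuous f} -> {within A, continuous (fun r => vc (f r) i)}.
Proof.
move=> cf x.
exact: (continuous_comp (cf x) (@coord_continuous R 1 n ord0 i (f x))).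
Qed.
Lemma rmax_deriv (R : realType) (f : R -> R) (a c b : R) : c < b -> derivable f c 1 ->
  (forall x, c < x < b -> f x - f c <= a * (x - c)) -> 'D_1 f c <= a.
Proof.
move=> cb df hf.
rewrite ['D_1 f c]cvg_at_rightE; last exact: df.
apply: limr_le.
  rewrite -(cvg_at_rightE (fun h : R => h^-1 *: ((f \o shift c) _ - f c))) //.
  apply: cvg_trans df; apply: cvg_app.
  move=> A [e egt0 Ae]; exists e => // x xe xgt0; apply: Ae => //.
  exact/lt0r_neq0.
near=> h.
have h0 : 0 < h by near: h; exists 1 => /=.
have hb : h < b - c.
  near: h; exists (b - c); first by rewrite /= subr_gt0.
  move=> y; rewrite /= distrC subr0 => /(le_lt_trans (ler_norm _)) //.
rewrite /= [_%:A]mulr1.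
have := hf (h + c); rewrite ltrDr h0 -ltrBrDr hb addrK => /(_ isT) hle.
rewrite -(ler_pM2l h0) mulrA mulfV ?gt_eqF // mul1r mulrC.
exact: hle.
Unshelve. all: by end_near. Qed.

Lemma closure_le (R : realType) (f : R -> R) (a b K : R) : a < b ->
  {within `[a, b], continuous f} -> (forall x, a < x < b -> f x <= K) -> f a <= K.
Proof.
move=> ab /(continuous_within_itvP _ ab) [_ fa _] hf.
apply: (cvgr_to_le fa).
near=> x; apply: hf; apply/andP; split.
  by near: x; exact: nbhs_right_gt.
by near: x; exact: nbhs_right_lt.
Unshelve. all: by end_near. Qed.

Lemma within_addlin (R : realType) (A : set R) (f : R -> R) (k : R) :
  {within A, continuous f} -> {within A, continuous (fun s => f s + k * s)}.
Proof.
move=> cf x; apply: continuousD; first exact: cf.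
exact: (@continuous_subspaceT _ _ A (fun s : R => k * s) (@mulrl_continuous R k)).
Qed.

Lemma max_principle (R : realType) n (w : 'I_n -> 'I_n -> R) (T C1 t : R)
  (phi Hs : R -> 'rV[R]_n) :
  (forall i j, 0 <= w i j) -> t < T ->
  {within `[t, T], continuous phi} ->
  (forall s, t < s < T -> derivable phi s 1) ->
  (forall s, t < s < T -> derive1 phi s = Hs s - glap w (phi s)) ->
  (forall s i, t < s < T -> - C1 <= vc (Hs s) i) ->
  (forall i, vc (phi T) i <= C1) ->
  forall s i, t < s < T -> vc (phi s) i <= C1 + C1 * (T - s).
Proof.
move=> wge0 tT cphi dphi ephi Hge gT s0 i0 hs0.
have s0T : s0 < T by case/andP: hs0.
have ts0 : t < s0 by case/andP: hs0.
apply/ler_addgt0Pr => e e0.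
pose d := e / (T - s0).
have d0 : 0 < d by apply: divr_gt0 => //; rewrite subr_gt0.
have ed : e = d * (T - s0) by rewrite /d divfK // gt_eqF // subr_gt0.
pose k := C1 + d.
pose v i s := vc (phi s) i + k * s.
suff : v i0 s0 <= C1 + k * T.
  by rewrite /v /k ed => h; lra.
rewrite leNgt; apply/negP => hlt.
have cv : forall i, {within `[s0, T], continuous (v i)}.
  move=> i; apply: within_addlin; apply: vc_cont.
  apply: continuous_subspaceW cphi; apply: subset_itvr; rewrite bnd_simp; exact: ltW.
have ex : forall i, exists c, c \in `[s0, T] /\ forall x, x \in `[s0, T] -> v i x <= v i c.
  move=> i; have [c c1 c2] := EVT_max (ltW s0T) (cv i); by exists c.
have [c hc] := choice ex.
case: (@arg_maxP _ _ 'I_n i0 xpredT (fun i => v i (c i)) isT) => k0 _ Hk.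
have [cin cmax] := hc k0.
have cs0 : s0 <= c k0 by move: cin; rewrite in_itv /= => /andP[].
have cle : c k0 <= T by move: cin; rewrite in_itv /= => /andP[].
have big : C1 + k * T < v k0 (c k0).
  apply: (lt_le_trans hlt); apply: le_trans (Hk i0 isT).
  by apply: (hc i0).2; rewrite in_itv /= lexx ltW.
have cT : c k0 < T.
  rewrite lt_neqAle cle andbT; apply/negP => /eqP ceq.
  move: big; rewrite ceq /v => big.
  have := gT k0; lra.
have tc : t < c k0 by apply: lt_le_trans cs0.
have hct : t < c k0 < T by rewrite tc cT.
have vj : forall j, vc (phi (c k0)) j <= vc (phi (c k0)) k0.
  move=> j.
  have : v j (c k0) <= v k0 (c k0).
    apply: le_trans (Hk j isT); apply: (hc j).2; exact: cin.
  rewrite /v; lra.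
have [IDd IDv] := @vc_derive R n phi (c k0) k0 (dphi _ hct).
have Dle : 'D_1 (fun r => vc (phi r) k0) (c k0) <= - k.
  apply: (@rmax_deriv R (fun r => vc (phi r) k0) (- k) (c k0) T cT).
    exact: IDd.
  move=> x /andP[cx xT].
  have : v k0 x <= v k0 (c k0).
    apply: cmax; rewrite in_itv /= (ltW xT) andbT; apply: le_trans cs0 _; exact: ltW.
  rewrite /v; lra.
rewrite IDv (ephi _ hct) /vc mxE -/(vc _ k0) mxE -/(vc _ k0) in Dle.
have lap : vc (glap w (phi (c k0))) k0 <= 0.
  rewrite /glap /vc mxE; apply: sumr_le0 => j _.
  apply: mulr_ge0_le0 => //; rewrite subr_le0; exact: vj.
have := Hge _ k0 hct.
move=> hge.
rewrite /k in Dle; lra.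
Qed.

Section Alg.
Variables (R : realType) (n : nat) (w : 'I_n -> 'I_n -> R).
Hypothesis wsym : forall i j, w i j = w j i.
Hypothesis wge0 : forall i j, 0 <= w i j.

Lemma vc_glap u i : vc (glap w u) i = \sum_j w i j * (vc u j - vc u i).
Proof. by rewrite /vc /glap mxE. Qed.

Lemma vc_gdiv m i : vc (gdiv w m) i = \sum_(j < n | j != i) Num.sqrt (w i j) * m j i.
Proof. by rewrite /vc /gdiv mxE. Qed.

Lemma lap_sum u : \sum_i vc (glap w u) i = 0.
Proof.
set Z := \sum_i _.
have : Z = - Z.
  rewrite {1}/Z (eq_bigr _ (fun i _ => vc_glap u i)) exchange_big /Z.
  rewrite -sumrN; apply: eq_bigr => i _; rewrite vc_glap -sumrN.
  by apply: eq_bigr => j _; rewrite wsym; lra.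
lra.
Qed.

Lemma gdiv_unf m i : skew_sym m ->
  vc (gdiv w m) i = \sum_j Num.sqrt (w i j) * m j i.
Proof.
move=> sk; rewrite vc_gdiv [RHS](bigD1 i) //=.
have -> : m i i = 0 by have := sk i i; lra.
by rewrite mulr0 add0r.
Qed.

Lemma div_sum m : skew_sym m -> \sum_i vc (gdiv w m) i = 0.
Proof.
move=> sk.
set Z := \sum_i _.
have : Z = - Z.
  rewrite {1}/Z (eq_bigr _ (fun k _ => @gdiv_unf m k sk)) exchange_big /Z.
  rewrite -sumrN; apply: eq_bigr => i _; rewrite gdiv_unf // -sumrN.
  by apply: eq_bigr => j _; rewrite wsym (sk i j); lra.
lra.
Qed.

Lemma lap_sym u v : \sum_i vc u i * vc (glap w v) i = \sum_i vc v i * vc (glap w u) i.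
Proof.
have E : forall u v, \sum_i vc u i * vc (glap w v) i =
   \sum_i \sum_j w i j * vc u i * vc v j - \sum_i (vc u i * vc v i) * (\sum_j w i j).
  move=> a b; rewrite -sumrB /=; apply: eq_bigr => i _.
  rewrite vc_glap !mulr_sumr -sumrB; apply: eq_bigr => j _.
  ring.
rewrite !E; congr (_ - _).
  rewrite exchange_big; apply: eq_bigr => i _; apply: eq_bigr => j _.
  by rewrite wsym; ring.
by apply: eq_bigr => i _; rewrite [vc v i * _]mulrC.
Qed.

Lemma div_dual lam u m : skew_sym m ->
  lam * \sum_i vc u i * vc (gdiv w m) i = - sdot w m (lam *: ggrad w u).
Proof.
move=> sk.
set X := \sum_i \sum_j m i j * Num.sqrt (w i j) * vc u i.
have E1 : \sum_i vc u i * vc (gdiv w m) i = - X.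
  rewrite /X -sumrN; apply: eq_bigr => i _.
  rewrite gdiv_unf // mulr_sumr -sumrN; apply: eq_bigr => j _.
  rewrite (sk j i); ring.
have E2 : sdot w m (lam *: ggrad w u) = lam * X.
  rewrite /sdot.
  have F : forall i, \sum_(j < n | 0 < w i j) m i j * (lam *: ggrad w u) i j
       = \sum_j lam * (m i j * Num.sqrt (w i j) * (vc u i - vc u j)).
    move=> i; rewrite big_mkcond /=; apply: eq_bigr => j _.
    rewrite !mxE; case: ifP => wp; first by ring.
    have -> : w i j = 0 by apply/eqP; rewrite eq_le wge0 andbT leNgt wp.
    by rewrite sqrtr0; ring.
  rewrite (eq_bigr _ (fun i _ => F i)).
  have G : \sum_i \sum_j lam * (m i j * Num.sqrt (w i j) * (vc u i - vc u j))
     = lam * X - lam * \sum_i \sum_j m i j * Num.sqrt (w i j) * vc u j.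
    rewrite /X mulr_sumr mulr_sumr -sumrB; apply: eq_bigr => i _.
    rewrite mulr_sumr mulr_sumr -sumrB; apply: eq_bigr => j _; ring.
  have K : \sum_i \sum_j m i j * Num.sqrt (w i j) * vc u j = - X.
    rewrite exchange_big /X -sumrN; apply: eq_bigr => i _; rewrite -sumrN.
    by apply: eq_bigr => j _; rewrite (sk i j) wsym; ring.
  rewrite G K; field; lra.
by rewrite E1 E2; ring.
Qed.

End Alg.

Arguments vc_glap {R n w}.
Arguments vc_gdiv {R n w}.
Arguments lap_sum {R n w}.
Arguments gdiv_unf {R n w}.
Arguments div_sum {R n w}.
Arguments lap_sym {R n w}.
Arguments div_dual {R n w}.

Section H.
Variable R : realType.

Lemma cont_sum n (A : set R) (f : 'I_n -> R -> R) :
  (forall j, {within A, continuous (f j)}) ->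
  {within A, continuous (fun r => \sum_j f j r)}.
Proof.
move=> cf.
suff : forall sq : seq 'I_n, {within A, continuous (fun r => \sum_(j <- sq) f j r)} by apply.
elim=> [|j sq IH].
  rewrite (_ : (fun r => _) = (fun _ => 0)); last by apply: funext => r; rewrite big_nil.
  by move=> x; exact: cst_continuous.
rewrite (_ : (fun r => _) = (fun r => f j r + \sum_(j <- sq) f j r)); last by apply: funext => r; rewrite big_cons.
by move=> x; apply: continuousD; [exact: cf | exact: IH].
Qed.

Lemma cont_mul (A : set R) (f g : R -> R) :
  {within A, continuous f} -> {within A, continuous g} ->
  {within A, continuous (fun r => f r * g r)}.
Proof. by move=> cf cg x; apply: continuousM; [exact: cf | exact: cg]. Qed.



Lemma cont_aff (A : set R) (F : R -> R) a b :
  {within A, continuous F} -> {within A, continuous (fun r => a * F r + b * r)}.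
Proof.
move=> cf; apply: (@within_addlin R A (fun r => a * F r) b).
apply: (@cont_mul A (fun _ => a) F) => // x; exact: cst_continuous.
Qed.


Lemma der_sum n (f : 'I_n -> R -> R) (df : 'I_n -> R) (r : R) :
  (forall j, is_derive r 1 (f j) (df j)) ->
  is_derive r 1 (fun x => \sum_j f j x) (\sum_j df j).
Proof. by move=> hd; rewrite -fct_sumE; apply: is_derive_sum. Qed.

Lemma der_mul (f g : R -> R) (df dg r : R) :
  is_derive r 1 f df -> is_derive r 1 g dg ->
  is_derive r 1 (fun x => f x * g x) (f r * dg + g r * df).
Proof. by move=> hf hg; have := is_deriveM hf hg. Qed.

Lemma der_aff (F : R -> R) (dF a b r : R) : is_derive r 1 F dF ->
  is_derive r 1 (fun x => a * F x + b * x) (a * dF + b).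
Proof.
move=> hF.
have h1 : is_derive r 1 (a *: F) (a *: dF) by exact: is_deriveZ.
have h2 : is_derive r 1 (b *: (@id R)) (b *: (1 : R)) by apply: is_deriveZ.
have := is_deriveD h1 h2.
rewrite /= => hD; apply: DeriveDef; first exact: ex_derive.
by rewrite derive_val; congr (_ + _); rewrite [_ *: _]mulr1.
Qed.

Lemma mono_le (f df : R -> R) a b : {within `[a, b], continuous f} ->
  (forall x, a < x < b -> is_derive x 1 f (df x)) -> (forall x, a < x < b -> df x <= 0) ->
  forall x y, a <= x -> x <= y -> y <= b -> f y <= f x.
Proof.
move=> cf hd hn x y ax xy yb.
apply: (@ler0_derive1_le_cc R f a b _ _ cf y x _ _ xy).
- by move=> z; rewrite in_itv /= => /hd [].
- move=> z; rewrite in_itv /= => hz; rewrite derive1E.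
  by have [_ ->] := hd z hz; exact: hn.
- by rewrite in_itv /= yb (le_trans ax xy).
- by rewrite in_itv /= ax (le_trans xy yb).
Qed.

Lemma mono_ge (f df : R -> R) a b : {within `[a, b], continuous f} ->
  (forall x, a < x < b -> is_derive x 1 f (df x)) -> (forall x, a < x < b -> 0 <= df x) ->
  forall x y, a <= x -> x <= y -> y <= b -> f x <= f y.
Proof.
move=> cf hd hn x y ax xy yb.
apply: (@ger0_derive1_le_cc R f a b _ _ cf x y _ _ xy).
- by move=> z; rewrite in_itv /= => /hd [].
- move=> z; rewrite in_itv /= => hz; rewrite derive1E.
  by have [_ ->] := hd z hz; exact: hn.
- by rewrite in_itv /= ax (le_trans xy yb).
- by rewrite in_itv /= yb (le_trans ax xy).
Qed.
End H.

Arguments cont_sum {R n A f}.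
Arguments cont_mul {R A f g}.
Arguments cont_aff {R A F}.
Arguments der_sum {R n f df r}.
Arguments der_mul {R f g df dg r}.
Arguments der_aff {R F dF a b r}.
Arguments mono_le {R f df a b}.
Arguments mono_ge {R f df a b}.
Arguments vc_derive {R n f s}.
Arguments vc_cont {R n f A}.

Lemma vcD (R : realType) n (a b : 'rV[R]_n) j : vc (a + b) j = vc a j + vc b j.
Proof. by rewrite /vc !mxE. Qed.
Lemma vcB (R : realType) n (a b : 'rV[R]_n) j : vc (a - b) j = vc a j - vc b j.
Proof. by rewrite /vc !mxE. Qed.
Theorem proposition3p3 (R : realType) (n : nat) (w : 'I_n -> 'I_n -> R)
  (T C1 : R)
  (H : 'rV[R]_n * 'M[R]_n -> 'rV[R]_n)
  (B : 'rV[R]_n * 'M[R]_n -> 'M[R]_n)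
  (g : 'rV[R]_n -> 'rV[R]_n)
  (eps : R) (mu : 'rV[R]_n) (t lambda : R)
  (phi rho : R -> 'rV[R]_n) :
  weighted_graph w ->
  0 < T -> 0 < C1 ->
  C1_on (@tangS R n) (@dom01S R n) H ->
  C1_on (@tangS R n) (@dom01S R n) B ->
  (forall x, dom01S x -> skew_sym (B x)) ->
  (forall x, dom01S x -> sdot w (B x) (snd x) >= vdot (H x) (fst x) - C1) ->
  (forall x i, dom01S x -> vc (H x) i >= - C1) ->
  (forall r, (forall i, 0 <= vc r i <= 1) -> forall i, `|vc (g r) i| <= C1) ->
  0 < eps -> Peps eps mu -> 0 <= t < T -> 0 <= lambda <= 1 ->
  (* (phi, rho) is a classical solution on [t, T] *)
  C1_interval t T phi -> C1_interval t T rho ->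
  (forall s, t <= s <= T -> forall i, 0 < vc (rho s) i < 1) ->
  (forall s, t < s < T ->
     derive1 phi s = H (rho s, lambda *: ggrad w (phi s)) - glap w (phi s)) ->
  (forall s, t < s < T ->
     derive1 rho s = gdiv w (B (rho s, lambda *: ggrad w (phi s))) + glap w (rho s)) ->
  phi T = g (rho T) -> rho t = mu ->
  forall s, t < s < T -> forall i,
    eps * `|lambda * vc (phi s) i| <= (5 * (T - t) + 4) * C1.
Proof.
move=> [wsym wge0 wii _] T0 C0 _ _ Bsk Hdual Hge gb e0 [musum mugt] /andP[t0 tT]
  /andP[l0 l1] [cphi [dphi _]] [crho [drho _]] rho01 ephi erho phiT rhot s hs i.
have [ts sT] : t < s /\ s < T by case/andP: hs.
pose X r := (rho r, lambda *: ggrad w (phi r)).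
have skp : forall r, skew_sym (lambda *: ggrad w (phi r)).
  by move=> r a b; rewrite !mxE (wsym a b); ring.
have dom : forall r, t < r < T -> dom01S (X r).
  move=> r /andP[h1 h2]; rewrite /dom01S /=; split; last exact: skp.
  by move=> j; apply: rho01; rewrite !ltW.
have dphic : forall r j, t < r < T ->
    is_derive r 1 (fun x => vc (phi x) j) (vc (H (X r)) j - vc (glap w (phi r)) j).
  by move=> r j hr; rewrite -vcB -(ephi _ hr); apply: vc_derive; exact: dphi.
have drhoc : forall r j, t < r < T ->
    is_derive r 1 (fun x => vc (rho x) j) (vc (gdiv w (B (X r))) j + vc (glap w (rho r)) j).
  by move=> r j hr; rewrite -vcD -(erho _ hr); apply: vc_derive; exact: drho.
have mass : forall r, t <= r <= T -> \sum_j vc (rho r) j = 1.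
  have cS : {within `[t, T], continuous (fun r => \sum_j vc (rho r) j)}.
    by apply: cont_sum => j; exact: vc_cont.
  have dS : forall r, t < r < T -> is_derive r 1 (fun r => \sum_j vc (rho r) j) 0.
    move=> r hr; have := der_sum (fun j => drhoc r j hr).
    by rewrite big_split /= (div_sum wsym) ?(lap_sum wsym) ?addr0 //; apply: Bsk; exact: dom.
  move=> r /andP[a b]; apply/eqP; rewrite eq_le; apply/andP; split.
    by rewrite -musum -rhot; apply: (mono_le cS dS) => //; move=> *; exact: lexx.
  by rewrite -musum -rhot; apply: (mono_ge cS dS) => //; move=> *; exact: lexx.
have gT : forall j, vc (phi T) j <= C1.
  move=> j; rewrite phiT.
  have := gb (rho T) _ j; rewrite ler_norml => /(_ _)/andP[] //.
  move=> k; have := rho01 T _ k; rewrite lexx ltW //= => /(_ isT)/andP[a b].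
  by rewrite !ltW.
have mp := @max_principle R n w T C1 t phi (fun r => H (X r)) wge0 tT cphi dphi ephi
  (fun r j hr => Hge _ j (dom r hr)) gT.
pose U := C1 + C1 * (T - t).
have U0 : 0 <= U by rewrite /U; nra.
have ub : forall r j, t <= r <= T -> vc (phi r) j <= U.
  move=> r j /andP[a b].
  have int : forall x, t < x < T -> vc (phi x) j <= U.
    move=> x hx; apply: le_trans (mp x j hx) _; rewrite /U.
    case/andP: hx => h1 h2; nra.
  have [->|rT] := eqVneq r T; first by have := gT j; rewrite /U; nra.
  have [tr|] := eqVneq t r.
    rewrite -tr; apply: (@closure_le R (fun x => vc (phi x) j) t T U tT (vc_cont j cphi)) => x hx; exact: int.
  move=> tr; apply: int; rewrite lt_neqAle tr a /= lt_neqAle rT b //.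
pose F r := \sum_j vc (phi r) j * vc (rho r) j.
have cF : {within `[t, T], continuous F}.
  by apply: cont_sum => j; apply: cont_mul; exact: vc_cont.
have dual : lambda * F T + (- (2 * C1)) * T <= lambda * F t + (- (2 * C1)) * t.
  pose dG r := lambda * (\sum_j (vc (phi r) j * (vc (gdiv w (B (X r))) j + vc (glap w (rho r)) j) +
                   vc (rho r) j * (vc (H (X r)) j - vc (glap w (phi r)) j))) + - (2 * C1).
  have dGd : forall r, t < r < T -> is_derive r 1 (fun r => lambda * F r + (- (2 * C1)) * r) (dG r).
    move=> r hr; apply: der_aff.
    exact: (der_sum (fun j => der_mul (dphic r j hr) (drhoc r j hr))).
  apply: (mono_le (cont_aff lambda (- (2 * C1)) cF) dGd _ t T (lexx t) (ltW tT) (lexx T)).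
  move=> r hr; rewrite /dG.
  have skB : skew_sym (B (X r)) by apply: Bsk; exact: dom.
  set Hr := H (X r); set Br := B (X r).
  have E : \sum_j (vc (phi r) j * (vc (gdiv w Br) j + vc (glap w (rho r)) j) +
                   vc (rho r) j * (vc Hr j - vc (glap w (phi r)) j))
         = \sum_j vc (phi r) j * vc (gdiv w Br) j + vdot Hr (rho r).
    rewrite /vdot -big_split /=.
    rewrite (eq_bigr (fun j => (vc (phi r) j * vc (gdiv w Br) j + vc Hr j * vc (rho r) j) +
        (vc (phi r) j * vc (glap w (rho r)) j - vc (rho r) j * vc (glap w (phi r)) j)));
      last by move=> j _; ring.
    by rewrite big_split /= sumrB (lap_sym wsym) subrr addr0.
  rewrite E mulrDr (div_dual wsym wge0 _ _ _ skB).
  have hd := Hdual (X r) (dom r hr); rewrite /= -/Hr -/Br in hd.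
  have hv : - C1 <= vdot Hr (rho r).
    have <- : \sum_j (- C1) * vc (rho r) j = - C1.
      by rewrite -mulr_sumr mass ?mulr1 //; case/andP: hr => a b; rewrite !ltW.
    apply: ler_sum => j _; apply: ler_wpM2r.
      case/andP: hr => a b; have hr' : t <= r <= T by rewrite !ltW.
      by have /andP[c _] := rho01 r hr' j; exact: ltW.
    exact: Hge (dom r hr).
  have p1 : 0 <= (1 - lambda) * (vdot Hr (rho r) + C1) by apply: mulr_ge0; lra.
  have p2 : 0 <= lambda * C1 by apply: mulr_ge0; lra.
  nra.
pose N : R := n%:R.
pose P r := \sum_j vc (phi r) j.
have cP : {within `[t, T], continuous P} by apply: cont_sum => j; exact: vc_cont.
pose dQ r := 1 * (\sum_j (vc (H (X r)) j - vc (glap w (phi r)) j)) + N * C1.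
have dQd : forall r, t < r < T -> is_derive r 1 (fun r => 1 * P r + (N * C1) * r) (dQ r).
  move=> r hr; apply: der_aff; exact: (der_sum (fun j => dphic r j hr)).
have sumC : \sum_(k < n) (- C1) = - (N * C1).
  by rewrite sumr_const card_ord -mulr_natl mulrN.
have mono : 1 * P t + (N * C1) * t <= 1 * P s + (N * C1) * s.
  apply: (mono_ge (cont_aff 1 (N * C1) cP) dQd _ t s (lexx t) (ltW ts) (ltW sT)).
  move=> r hr; rewrite /dQ sumrB (lap_sum wsym) subr0 mul1r.
  have : \sum_(k < n) (- C1) <= \sum_j vc (H (X r)) j.
    by apply: ler_sum => j _; exact: Hge (dom r hr).
  rewrite sumC => h; rewrite -(lerD2r (N * C1)) addNr in h; exact: h.
have gTb : forall j, `|vc (phi T) j| <= C1.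
  move=> j; rewrite phiT; apply: gb => k.
  have hT : t <= T <= T by rewrite lexx ltW.
  by have /andP[a b] := rho01 T hT k; rewrite !ltW.
have FT : - C1 <= F T.
  have <- : \sum_j (- C1) * vc (rho T) j = - C1.
    by rewrite -mulr_sumr mass ?mulr1 // lexx ltW.
  apply: ler_sum => j _; apply: ler_wpM2r.
    have hT : t <= T <= T by rewrite lexx ltW.
    by have /andP[a _] := rho01 T hT j; exact: ltW.
  by have := gTb j; rewrite ler_norml => /andP[].
have hA : - C1 - 2 * C1 * (T - t) <= lambda * F t.
  have p : 0 <= lambda * (F T + C1) by apply: mulr_ge0; lra.
  have q : lambda * C1 <= C1 by nra.
  nra.
set y := vc (phi s) i.
set Pt := P t.
have hB : F t <= eps * Pt + (1 - N * eps) * U.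
  have -> : eps * Pt + (1 - N * eps) * U = \sum_j (eps * vc (phi t) j + (vc mu j - eps) * U).
    rewrite big_split /= -mulr_sumr -mulr_suml sumrB musum sumr_const card_ord -mulr_natl.
    rewrite /Pt /P /N; ring.
  rewrite /F rhot; apply: ler_sum => j _.
  have htw : t <= t <= T by rewrite lexx ltW.
  have hu := ub t j htw.
  have := mugt j => hm.
  have : 0 <= (vc mu j - eps) * (U - vc (phi t) j) by apply: mulr_ge0; lra.
  nra.
have hD : P s <= y - U + N * U.
  have : \sum_j (vc (phi s) j - U) <= y - U.
    rewrite (bigD1 i) //= -/y.
    have : \sum_(j < n | j != i) (vc (phi s) j - U) <= 0.
      have hsw : t <= s <= T by rewrite !ltW.
      by apply: sumr_le0 => j _; have := ub s j hsw; lra.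
    lra.
  rewrite sumrB sumr_const card_ord -mulr_natl -/N; rewrite /P; lra.
have hN : 1 <= N by rewrite /N ler1n; apply: leq_ltn_trans (ltn_ord i).
have hE : N * eps <= 1.
  rewrite -musum; have <- : \sum_(j < n) eps = N * eps by rewrite sumr_const card_ord -mulr_natl.
  by apply: ler_sum => j _; exact: ltW.
have he1 : eps <= 1 by nra.
have h3 : Pt <= y + (N - 1) * U + N * C1 * (s - t) by rewrite /Pt; lra.
have h4 : lambda * eps * Pt <= lambda * eps * (y + (N - 1) * U + N * C1 * (s - t)).
  by apply: ler_wpM2l => //; apply: mulr_ge0; lra.
have h2 : lambda * F t <= lambda * (eps * Pt + (1 - N * eps) * U) by apply: ler_wpM2l.
have h5 : lambda * (1 - eps) * U <= U.
  have : lambda * (1 - eps) <= 1 by nra.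
  have : 0 <= lambda * (1 - eps) by apply: mulr_ge0; lra.
  nra.
have h6 : lambda * (eps * N) * (C1 * (s - t)) <= C1 * (T - t).
  have a1 : lambda * (eps * N) <= 1 by nra.
  have a2 : 0 <= lambda * (eps * N) by apply: mulr_ge0; nra.
  have a3 : 0 <= C1 * (s - t) by nra.
  have a4 : C1 * (s - t) <= C1 * (T - t) by nra.
  nra.
have lower : - (2 * C1 + 4 * C1 * (T - t)) <= eps * (lambda * y).
  have -> : eps * (lambda * y) = lambda * eps * y by ring.
  have Ue : U = C1 + C1 * (T - t) by [].
  lra.
have upper : eps * (lambda * y) <= U.
  have u1 : lambda * y <= U.
    have : y <= U by apply: ub; rewrite !ltW.
    nra.
  have : eps * (lambda * y) <= eps * U by apply: ler_wpM2l => //; exact: ltW.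
  nra.
rewrite -(gtr0_norm e0) -normrM ler_norml; apply/andP; split.
  have : 0 <= C1 * (T - t) by nra.
  lra.
have : 0 <= C1 * (T - t) by nra.
rewrite /U in upper; lra.
Qed.
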